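(* Let $\psi\in\mathbb{R}[x]$. If the constant function $1$ is in the image of the Fischer operator $F_\psi$, then every zero $x\in\mathbb{R}^d$ of $\psi$ has multiplicity $\le 2$.
   Context: $\mathbb{R}[x]$ denotes the real polynomials in $d$ variables, $\Delta$ the Laplacian, and $F_\psi:\mathbb{R}[x]\to\mathbb{R}[x]$, $F_\psi(q)=\Delta(\psi q)$. The multiplicity of a zero $x_0$ of a polynomial $\psi$ is the largest natural number $N$ such that $\frac{\partial^\alpha}{\partial x^\alpha}\psi(x_0)=0$ for all multi-indices $\alpha\in\mathbb{N}_0^d$ with $|\alpha|\le N-1$. *)

(* Defs.v *)
From Stdlib Require Import Rdefinitions.
From HB Require Import structures.
From mathcomp Require Import all_boot all_algebra.
From mathcomp Require Import mpoly.
From mathcomp Require Import Rstruct.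

Set Implicit Arguments.
Unset Strict Implicit.
Unset Printing Implicit Defensive.

Import GRing.Theory.
Local Open Scope ring_scope.

Definition laplacian (d : nat) (p : {mpoly R[d]}) : {mpoly R[d]} :=
  \sum_(i < d) (p^`M(i))^`M(i).

Definition fischer (d : nat) (psi q : {mpoly R[d]}) : {mpoly R[d]} :=
  laplacian (psi * q).

(* "x0 has multiplicity at least N for psi": all partial derivatives
   d^alpha psi with |alpha| <= N-1 vanish at x0.  The multiplicity is the
   largest such N. *)
Definition vanishes_to_order (d : nat) (psi : {mpoly R[d]}) (x0 : 'I_d -> R)
    (N : nat) : Prop :=
  forall alpha : 'X_{1..d}, (mdeg alpha <= N.-1)%N -> (psi^`M[alpha]).@[x0] = 0.

Definition multiplicity_le (d : nat) (psi : {mpoly R[d]}) (x0 : 'I_d -> R)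
    (k : nat) : Prop :=
  forall N : nat, vanishes_to_order psi x0 N -> (N <= k)%N.

(* Main.v *)
Require Import Defs.
From Stdlib Require Import Rdefinitions.
From HB Require Import structures.
From mathcomp Require Import all_boot all_algebra.
From mathcomp Require Import mpoly.
From mathcomp Require Import Rstruct.
Local Open Scope ring_scope.
Import GRing.Theory.

Theorem mainTheorem3 (d : nat) (psi : {mpoly R[d]}) :
  (exists q : {mpoly R[d]}, fischer psi q = 1) ->
  forall x0 : 'I_d -> R, psi.@[x0] = 0 -> multiplicity_le psi x0 2.
Proof.
move=> [q Hq] x0 H0 N HN.
rewrite leqNgt; apply/negP => HN3.
have h0 : psi.@[x0] = 0 by [].
have h1 : forall i, (psi^`M(i)).@[x0] = 0.
  move=> i; rewrite -mderivmU1m; apply: HN; rewrite mdeg1.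
  by move: HN3; case: (N) => // [[|[|]]].
have h2 : forall i, (psi^`M(i)^`M(i)).@[x0] = 0.
  move=> i; rewrite -!mderivmU1m -mderivmDm; apply: HN; rewrite mdegD mdeg1.
  by move: HN3; case: (N) => // [[|[|]]].
have : (fischer psi q).@[x0] = 0.
  rewrite /fischer /laplacian.
  rewrite (big_morph (meval x0) (mevalD x0) (meval0 x0)).
  apply: big1 => i _.
  rewrite !mderivM !mderivD !mderivM !mevalD !mevalM h0 h1 h2.
  by rewrite !mul0r !add0r.
rewrite Hq meval1 => H1.
by move: (@oner_neq0 R); rewrite H1 eqxx.
Qed.
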